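(* For every $n\ge 4$, the number of strongly magic quad squares that can be made using the cards of the EvenQuads-$2^n$ deck is $2^n(2^n-1)(2^n-2)(2^n-4)(2^n-8)$.
   Context: The EvenQuads-$2^n$ deck consists of $2^n$ cards identified with the integers $0,1,\dots,2^n-1$ (equivalently with $\mathbb{Z}_2^n$ via binary expansion). Four cards $a,b,c,d$ form a quad if and only if $a\oplus b\oplus c\oplus d=0$, where $\oplus$ is bitwise XOR. A quad square is a $4\times4$ array of $16$ pairwise distinct cards. Index rows and columns by $0,1,2,3$; a quad square is strongly magic if for any four distinct positions $(i_1,j_1),\dots,(i_4,j_4)$ with $i_1\oplus i_2\oplus i_3\oplus i_4=0$ and $j_1\oplus j_2\oplus j_3\oplus j_4=0$, the four cards in these positions form a quad. *)

(* Defs.v *)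
From Stdlib Require Import PeanoNat.
From mathcomp Require Import all_boot.
Set Implicit Arguments. Unset Strict Implicit. Unset Printing Implicit Defensive.

Definition xorn (a b : nat) : nat := Nat.lxor a b.

Definition card (n : nat) := 'I_(2 ^ n).

Definition is_quad (a b c d : nat) : bool :=
  xorn (xorn (xorn a b) c) d == 0.

Definition array4 (n : nat) := {ffun 'I_4 * 'I_4 -> card n}.

Definition quad_square (n : nat) (A : array4 n) : bool := injectiveb A.

Definition strongly_magic (n : nat) (A : array4 n) : bool :=
  [forall p1 : 'I_4 * 'I_4, forall p2 : 'I_4 * 'I_4,
   forall p3 : 'I_4 * 'I_4, forall p4 : 'I_4 * 'I_4,
     (uniq [:: p1; p2; p3; p4]
      && is_quad p1.1 p2.1 p3.1 p4.1
      && is_quad p1.2 p2.2 p3.2 p4.2)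
     ==> is_quad (A p1) (A p2) (A p3) (A p4)].

(* Main.v *)
Require Import Defs.
From mathcomp Require Import all_boot.
From Stdlib Require PeanoNat.
Module N := PeanoNat.Nat.
Set Implicit Arguments. Unset Strict Implicit. Unset Printing Implicit Defensive.
Arguments xorn : simpl never.
Arguments Nat.lxor : simpl never.

Ltac xsolve := rewrite /xorn; apply N.bits_inj; let i := fresh "i" in intro i;
  rewrite ?N.lxor_spec ?N.bits_0;
  repeat match goal with |- context [Nat.testbit ?x i] => case: (Nat.testbit x i) end;
  reflexivity.


Lemma xorn_inj a : injective (xorn a).
Proof.
move=> x y H.
have E z : xorn a (xorn a z) = z by xsolve.
by rewrite -(E x) -(E y) H.
Qed.

Lemma pow2E n : Nat.pow 2 n = 2 ^ n.
Proof. elim: n => // n IH; rewrite expnS -IH /=; by rewrite -multE. Qed.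

Lemma bits_high a n m : a < 2 ^ n -> n <= m -> Nat.testbit a m = false.
Proof.
move=> Ha Hm; case: (posnP a) => [->|Ha0]; first exact: N.bits_0.
apply: N.bits_above_log2.
have Hl : (N.log2 a < n)%coq_nat.
  apply: (proj1 (N.log2_lt_pow2 a n (ltP Ha0))); rewrite pow2E; exact/ltP.
apply: (N.lt_le_trans _ _ _ Hl); exact/leP.
Qed.

Lemma lt_of_bits a n : (forall m, n <= m -> Nat.testbit a m = false) -> a < 2 ^ n.
Proof.
move=> H; case: (posnP a) => [->|Ha0]; first by rewrite expn_gt0.
rewrite -pow2E; apply/ltP; apply: (proj2 (N.log2_lt_pow2 a n (ltP Ha0))).
case: (leqP n (N.log2 a)) => h; last exact/ltP.
have := H _ h; rewrite N.bit_log2 // => E.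
by move: Ha0; rewrite E.
Qed.

Lemma xorn_lt n a b : a < 2 ^ n -> b < 2 ^ n -> xorn a b < 2 ^ n.
Proof.
move=> Ha Hb; apply: lt_of_bits => m hm.
by rewrite /xorn N.lxor_spec (bits_high Ha hm) (bits_high Hb hm).
Qed.

Fixpoint allbits k := if k is k'.+1 then map (cons false) (allbits k') ++ map (cons true) (allbits k') else [:: [::]].
Definition bl (p : 'I_4 * 'I_4) : seq bool :=
  [:: Nat.testbit p.1 1; Nat.testbit p.1 0; Nat.testbit p.2 1; Nat.testbit p.2 0].
Definition o0 : 'I_4 := @Ordinal 4 0 isT.
Definition o1 : 'I_4 := @Ordinal 4 1 isT.
Definition o2 : 'I_4 := @Ordinal 4 2 isT.
Definition o3 : 'I_4 := @Ordinal 4 3 isT.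
Definition posl := [seq (i, j) | i <- [:: o0; o1; o2; o3], j <- [:: o0; o1; o2; o3]].
Lemma perm_bl : perm_eq (allbits 4) (map bl posl).
Proof. by vm_compute. Qed.
Lemma ord4P (P : 'I_4 -> Prop) : P o0 -> P o1 -> P o2 -> P o3 -> forall i, P i.
Proof.
move=> H0 H1 H2 H3 [[|[|[|[|k]]]] Hk] //.
- by have -> : Ordinal Hk = o0 by apply: val_inj.
- by have -> : Ordinal Hk = o1 by apply: val_inj.
- by have -> : Ordinal Hk = o2 by apply: val_inj.
- by have -> : Ordinal Hk = o3 by apply: val_inj.
Qed.
Lemma perm_pos : perm_eq (enum {: 'I_4 * 'I_4}) posl.
Proof.
apply: uniq_perm; first exact: enum_uniq; first by [].
move=> [i j]; rewrite mem_enum; symmetry.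
by elim/ord4P: i; elim/ord4P: j.
Qed.

Fixpoint combl (s : seq nat) (bs : seq bool) : nat :=
  match s, bs with
  | w :: s', b :: bs' => xorn (if b then w else 0) (combl s' bs')
  | _, _ => 0
  end.

Fixpoint spanl (s : seq nat) : seq nat :=
  if s is w :: s' then spanl s' ++ map (xorn w) (spanl s') else [:: 0].

Lemma spanlE s : spanl s = map (combl s) (allbits (size s)).
Proof.
elim: s => [|w s IH] //=.
rewrite IH map_cat -!map_comp; congr (_ ++ _); apply: eq_map => bs /=.
xsolve.
Qed.

Lemma size_allbits k : size (allbits k) = 2 ^ k.
Proof. by elim: k => // k IH; rewrite /= size_cat !size_map IH expnS mul2n addnn. Qed.

Lemma size_spanl s : size (spanl s) = 2 ^ size s.
Proof. by rewrite spanlE size_map size_allbits. Qed.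

Lemma combl_lt n s bs : all (fun x => x < 2 ^ n) s -> combl s bs < 2 ^ n.
Proof.
elim: s bs => [|w s IH] [|b bs] /=; rewrite ?expn_gt0 // => /andP [Hw Hs].
apply: xorn_lt; last exact: IH.
by case: b; rewrite ?expn_gt0.
Qed.

Lemma spanl_lt n s : all (fun x => x < 2 ^ n) s -> all (fun x => x < 2 ^ n) (spanl s).
Proof. move=> H; rewrite spanlE; apply/allP => y /mapP [bs _ ->]; exact: combl_lt. Qed.

Lemma mem0_spanl s : 0 \in spanl s.
Proof. by elim: s => [|w s IH] //=; rewrite mem_cat IH. Qed.

Lemma spanl_xor s x y : x \in spanl s -> y \in spanl s -> xorn x y \in spanl s.
Proof.
elim: s x y => [|w s IH] x y /=.
  by rewrite !inE => /eqP -> /eqP ->.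
rewrite !mem_cat => /orP [Hx|/mapP [x' Hx' ->]] /orP [Hy|/mapP [y' Hy' ->]].
- by rewrite IH.
- apply/orP; right; apply/mapP; exists (xorn x y'); first exact: IH.
  xsolve.
- apply/orP; right; apply/mapP; exists (xorn x' y); first exact: IH.
  xsolve.
- have -> : xorn (xorn w x') (xorn w y') = xorn x' y' by xsolve.
  by rewrite IH.
Qed.

Lemma uniq_spanl_cons w s : uniq (spanl (w :: s)) = uniq (spanl s) && (w \notin spanl s).
Proof.
rewrite /= cat_uniq (map_inj_uniq (@xorn_inj w)).
have -> : has (mem (spanl s)) (map (xorn w) (spanl s)) = (w \in spanl s).
  apply/hasP/idP => [[z /mapP [y Hy ->] Hz]|Hw].
    have -> : w = xorn (xorn w y) y by xsolve.
    exact: spanl_xor.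
  exists w => //; apply/mapP; exists 0; first exact: mem0_spanl.
  xsolve.
by case: (uniq _); case: (w \in _).
Qed.

Lemma count_notin n (l : seq nat) : uniq l -> all (fun x => x < 2 ^ n) l ->
  \sum_(u : Defs.card n) (val u \notin l) = 2 ^ n - size l.
Proof.
move=> Ul Al.
have Hin : #|[pred u : 'I_(2 ^ n) | val u \in l]| = size l.
  rewrite cardE -(size_map val); apply: perm_size; apply: uniq_perm => //.
    rewrite map_inj_uniq ?enum_uniq //; exact: val_inj.
  move=> x; apply/mapP/idP => [[u]|Hx].
    by rewrite mem_enum inE => Hu ->.
  have Hxn : x < 2 ^ n by move/allP: Al => /(_ x Hx).
  by exists (Ordinal Hxn) => //; rewrite mem_enum inE.
have Hc := cardC [pred u : 'I_(2 ^ n) | val u \in l].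
rewrite card_ord Hin in Hc.
rewrite -[in RHS]Hc addKn.
rewrite -sum1_card [RHS]big_mkcond /=; apply: eq_bigr => u _.
by rewrite !inE; case: (val u \in l).
Qed.

Lemma step n (T : finType) (f : T -> seq nat) k :
  (forall t, all (fun x => x < 2 ^ n) (f t)) -> (forall t, size (f t) = k) ->
  \sum_(x : T * Defs.card n) uniq (spanl (val x.2 :: f x.1)) =
  (\sum_(t : T) uniq (spanl (f t))) * (2 ^ n - 2 ^ k).
Proof.
move=> Hall Hsz.
rewrite -(pair_bigA _ (fun (t : T) (u : Defs.card n) => (uniq (spanl (val u :: f t)) : nat))).
rewrite big_distrl /=; apply: eq_bigr => t _.
under eq_bigr => u _ do rewrite uniq_spanl_cons.
case: (boolP (uniq (spanl (f t)))) => Hu /=.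
  rewrite mul1n -(Hsz t) -size_spanl; apply: count_notin => //.
  exact: spanl_lt.
by rewrite mul0n big1.
Qed.

Definition bxor (l1 l2 : seq bool) := map (fun p => xorb p.1 p.2) (zip l1 l2).

Lemma combl_xor s b1 b2 : size b1 = size b2 ->
  combl s (bxor b1 b2) = xorn (combl s b1) (combl s b2).
Proof.
elim: s b1 b2 => [|w s IH] [|x b1] [|y b2] //= H; try xsolve.
rewrite IH; last by case: H.
by case: x; case: y; xsolve.
Qed.

Section BQ.
Local Arguments Nat.testbit : simpl never.
Lemma bl_quad (p1 p2 p3 p4 : 'I_4 * 'I_4) :
  is_quad p1.1 p2.1 p3.1 p4.1 -> is_quad p1.2 p2.2 p3.2 p4.2 ->
  bxor (bxor (bxor (bl p1) (bl p2)) (bl p3)) (bl p4) = nseq 4 false.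
Proof.
rewrite /is_quad /xorn => /eqP H1 /eqP H2.
rewrite /bl /bxor /= -!N.lxor_spec H1 H2 !N.bits_0 //.
Qed.
End BQ.

Lemma xor4a a c1 c2 c3 c4 :
  xorn (xorn (xorn (xorn a c1) (xorn a c2)) (xorn a c3)) (xorn a c4) =
  xorn (xorn (xorn c1 c2) c3) c4.
Proof. xsolve. Qed.

Definition T5 n := (Defs.card n * Defs.card n * Defs.card n * Defs.card n * Defs.card n)%type.
Definition av n (x : T5 n) : nat := val x.1.1.1.1.
Definition ws n (x : T5 n) : seq nat := [:: val x.2; val x.1.2; val x.1.1.2; val x.1.1.1.2].

Lemma ws_lt n (x : T5 n) : all (fun y => y < 2 ^ n) (ws x).
Proof. by rewrite /= !ltn_ord. Qed.

Lemma mk_lt n (x : T5 n) p : xorn (av x) (combl (ws x) (bl p)) < 2 ^ n.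
Proof. apply: xorn_lt; [exact: ltn_ord | exact: combl_lt (ws_lt x)]. Qed.

Definition mk n (x : T5 n) : array4 n := [ffun p => Ordinal (mk_lt x p)].

Lemma mkE n (x : T5 n) p : val (mk x p) = xorn (av x) (combl (ws x) (bl p)).
Proof. by rewrite ffunE. Qed.

Lemma inj_mk n (x : T5 n) : quad_square (mk x) = uniq (spanl (ws x)).
Proof.
rewrite /quad_square /injectiveb /dinjectiveb.
rewrite (perm_uniq (perm_map _ perm_pos)).
rewrite -(map_inj_uniq val_inj) -map_comp.
rewrite spanlE (perm_uniq (perm_map _ perm_bl)) -map_comp.
have -> : map (val \o mk x) posl = map (xorn (av x)) (map (combl (ws x) \o bl) posl).
  by rewrite -map_comp; apply: eq_map => p; rewrite /= ffunE.
by rewrite map_inj_uniq //; exact: xorn_inj.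
Qed.

Lemma mk_magic n (x : T5 n) : strongly_magic (mk x).
Proof.
apply/forallP => p1; apply/forallP => p2; apply/forallP => p3; apply/forallP => p4.
apply/implyP => /andP [/andP [_ Q1] Q2].
rewrite /is_quad !mkE xor4a -!combl_xor // (bl_quad Q1 Q2) /=.
apply/eqP; xsolve.
Qed.

Definition xo n (u v : Defs.card n) : Defs.card n := Ordinal (xorn_lt (ltn_ord u) (ltn_ord v)).

Definition rb n (A : array4 n) : T5 n :=
  ((((A (o0, o0), xo (A (o0, o1)) (A (o0, o0))), xo (A (o0, o2)) (A (o0, o0))),
     xo (A (o1, o0)) (A (o0, o0))), xo (A (o2, o0)) (A (o0, o0))).

Lemma magicP n (A : array4 n) : strongly_magic A -> forall p1 p2 p3 p4 : 'I_4 * 'I_4,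
  uniq [:: p1; p2; p3; p4] -> is_quad p1.1 p2.1 p3.1 p4.1 -> is_quad p1.2 p2.2 p3.2 p4.2 ->
  is_quad (A p1) (A p2) (A p3) (A p4).
Proof.
move=> /forallP H p1 p2 p3 p4 U Q1 Q2.
move: (H p1) => /forallP/(_ p2)/forallP/(_ p3)/forallP/(_ p4)/implyP; apply.
by rewrite U Q1 Q2.
Qed.
Arguments magicP {n A} _ p1 p2 p3 p4 _ _ _.

Lemma quadE a b c d : is_quad a b c d -> d = xorn (xorn a b) c.
Proof.
rewrite /is_quad => /eqP H.
have E : d = xorn (xorn (xorn (xorn a b) c) d) (xorn (xorn a b) c) by xsolve.
by rewrite E H; xsolve.
Qed.

Lemma affine n (A : array4 n) : strongly_magic A ->
  forall p, val (A p) = xorn (av (rb A)) (combl (ws (rb A)) (bl p)).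
Proof.
move=> HA.
have H03 := quadE (magicP HA (o0,o0) (o0,o1) (o0,o2) (o0,o3) isT isT isT).
have H30 := quadE (magicP HA (o0,o0) (o1,o0) (o2,o0) (o3,o0) isT isT isT).
move=> [i j]; elim/ord4P: i; elim/ord4P: j; rewrite /=;
lazymatch goal with |- ?l = _ => lazymatch l with context [@pair _ _ ?i ?j] =>
  try rewrite (quadE (magicP HA (o0,o0) (i,o0) (o0,j) (i,j) isT isT isT)) end end;
rewrite ?H03 ?H30 /av /=; xsolve.
Qed.

Lemma mk_rb n (A : array4 n) : strongly_magic A -> mk (rb A) = A.
Proof.
move=> HA; apply/ffunP => p; apply: val_inj; rewrite mkE; symmetry; exact: affine.
Qed.

Lemma rb_mk n (x : T5 n) : rb (mk x) = x.
Proof.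
case: x => [[[[a v1] v2] v3] v4].
rewrite /rb; congr ((((_, _), _), _), _); apply: val_inj; rewrite /= !mkE /av /ws /=.

all: xsolve.
Qed.

Lemma cnt (T : finType) (P : pred T) : #|[set x | P x]| = \sum_(x : T) P x.
Proof. rewrite -sum1dep_card big_mkcond /=; apply: eq_bigr => x _; by case: (P x). Qed.

Theorem mainTheorem3 (n : nat) : 4 <= n ->
  #|[set A : array4 n | quad_square A && strongly_magic A]| =
  2 ^ n * (2 ^ n - 1) * (2 ^ n - 2) * (2 ^ n - 4) * (2 ^ n - 8).
Proof.
move=> _.
have -> : [set A : array4 n | quad_square A && strongly_magic A] =
          @mk n @: [set x : T5 n | uniq (spanl (ws x))].
  apply/setP => A; rewrite inE; apply/andP/imsetP => [[HQ HM]|[x]].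
    exists (rb A); last by rewrite mk_rb.
    by rewrite inE -inj_mk mk_rb.
  by rewrite inE => Hx ->; split; [rewrite inj_mk | exact: mk_magic].
rewrite card_imset; last exact: (can_inj (@rb_mk n)).
rewrite cnt /ws.
rewrite (@step n _ (fun t => [:: val t.2; val t.1.2; val t.1.1.2]) 3); last by []; last by move=> t; rewrite /= !ltn_ord.
rewrite (@step n _ (fun t => [:: val t.2; val t.1.2]) 2); last by []; last by move=> t; rewrite /= !ltn_ord.
rewrite (@step n _ (fun t => [:: val t.2]) 1); last by []; last by move=> t; rewrite /= !ltn_ord.
rewrite (@step n _ (fun t => [::]) 0) //.
by rewrite /= sum1_card card_ord.
Qed.
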